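(* Let $(V,\|\cdot\|)$ be a normed plane and $x,y\in V$ distinct. The segment $[xy]$ is not parallel to any nondegenerate segment contained in the unit circle $S$ if and only if for every $z\in\mathrm{bis}(x,y)\setminus[xy]$, the bisector $\mathrm{bis}(x,y)$ is contained in $C_z\cup(2z-C_z)$, where $C_z=\mathrm{conv}\big([zx\rangle\cup[zy\rangle\big)$ and $2z-C_z=\{2z-v:v\in C_z\}$ is the image of $C_z$ under the point reflection through $z$.
   Context: A normed (Minkowski) plane $(V,\|\cdot\|)$ is a two-dimensional real vector space with a norm; $S=\{v:\|v\|=1\}$ is its unit circle. For $x,y\in V$, $[xy]$ denotes the closed segment and $[xy\rangle$ the closed half-line starting at $x$ and passing through $y$. For distinct $x,y\in V$ the bisector is $\mathrm{bis}(x,y)=\{z\in V:\|z-x\|=\|z-y\|\}$. *)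

(* Defs.v *)
(* classical reals.  A normed plane is modelled as R^2 = R*R
   equipped with an arbitrary norm N (every 2-dimensional real normed space
   is linearly isometric to such a (R^2, N)). *)
From Stdlib Require Import Reals.
Open Scope R_scope.

Definition V : Type := (R * R)%type.

Definition vadd (u v : V) : V := (fst u + fst v, snd u + snd v).
Definition vscal (a : R) (u : V) : V := (a * fst u, a * snd u).
Definition vsub (u v : V) : V := (fst u - fst v, snd u - snd v).
Definition vzero : V := (0, 0).

Definition is_norm (N : V -> R) : Prop :=
  (forall u, N u = 0 -> u = vzero) /\
  (forall a u, N (vscal a u) = Rabs a * N u) /\
  (forall u v, N (vadd u v) <= N u + N v).

Definition unit_circle (N : V -> R) (v : V) : Prop := N v = 1.

Definition segment (x y : V) (p : V) : Prop :=
  exists t, 0 <= t <= 1 /\ p = vadd x (vscal t (vsub y x)).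

Definition halfline (x y : V) (p : V) : Prop :=
  exists t, 0 <= t /\ p = vadd x (vscal t (vsub y x)).

Definition bis (N : V -> R) (x y : V) (z : V) : Prop :=
  N (vsub z x) = N (vsub z y).

Definition convex (A : V -> Prop) : Prop :=
  forall u v t, A u -> A v -> 0 <= t <= 1 -> A (vadd u (vscal t (vsub v u))).

Definition conv (A : V -> Prop) (p : V) : Prop :=
  forall C : V -> Prop, convex C -> (forall q, A q -> C q) -> C p.

Definition Cz (x y z : V) : V -> Prop :=
  conv (fun p => halfline z x p \/ halfline z y p).

Definition reflCz (x y z : V) (p : V) : Prop :=
  exists v, Cz x y z v /\ p = vsub (vscal 2 z) v.

Definition parallel_seg (a b c d : V) : Prop :=
  exists l : R, vsub d c = vscal l (vsub b a).

Definition parallel_to_seg_in_S (N : V -> R) (x y : V) : Prop :=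
  exists u v : V, u <> v /\ (forall p, segment u v p -> unit_circle N p) /\
    parallel_seg x y u v.

(* Main.v *)
Require Import Defs.
From Stdlib Require Import Reals Lra Psatz.
Open Scope R_scope.

Ltac dV := repeat match goal with v : V |- _ => destruct v | v : (R*R)%type |- _ => destruct v end.
Ltac veq := dV; unfold vadd, vscal, vsub, vzero; simpl; f_equal; field; try lra.

Lemma Nscal N (HN : is_norm N) a u : N (vscal a u) = Rabs a * N u.
Proof. destruct HN as [_ [H _]]; apply H. Qed.

Lemma Ntri N (HN : is_norm N) u v : N (vadd u v) <= N u + N v.
Proof. destruct HN as [_ [_ H]]; apply H. Qed.

Lemma Nnonneg N (HN : is_norm N) u : 0 <= N u.
Proof.
  assert (E: vadd u (vscal (-1) u) = vscal 0 u) by veq.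
  pose proof (Ntri N HN u (vscal (-1) u)) as H. rewrite E, !(Nscal N HN) in H.
  rewrite Rabs_R0 in H. rewrite (Rabs_left (-1)) in H by lra. lra.
Qed.

Lemma Npos N (HN : is_norm N) a u : 0 <= a -> N (vscal a u) = a * N u.
Proof. intros. rewrite (Nscal N HN), Rabs_pos_eq; auto. Qed.

Lemma Nopp N (HN : is_norm N) u : N (vscal (-1) u) = N u.
Proof. rewrite (Nscal N HN), (Rabs_left (-1)) by lra. ring. Qed.

Lemma Nzero N (HN : is_norm N) u : N u = 0 -> u = vzero.
Proof. destruct HN as [H _]; apply H. Qed.

Lemma conv3 N (HN : is_norm N) c e s t u : s <= t -> t <= u ->
  (u - s) * N (vadd c (vscal t e)) <=
  (u - t) * N (vadd c (vscal s e)) + (t - s) * N (vadd c (vscal u e)).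
Proof.
  intros H1 H2.
  rewrite <- (Npos N HN (u - s)) by lra.
  rewrite <- (Npos N HN (u - t)) by lra.
  rewrite <- (Npos N HN (t - s)) by lra.
  assert (E: vscal (u - s) (vadd c (vscal t e)) =
     vadd (vscal (u - t) (vadd c (vscal s e))) (vscal (t - s) (vadd c (vscal u e)))) by veq.
  rewrite E. apply Ntri; auto.
Qed.

Lemma flat N (HN : is_norm N) c e t1 t2 t3 rho : t1 < t2 -> t2 < t3 ->
  N (vadd c (vscal t1 e)) <= rho -> N (vadd c (vscal t3 e)) <= rho ->
  rho <= N (vadd c (vscal t2 e)) ->
  forall t, t1 <= t <= t3 -> N (vadd c (vscal t e)) = rho.
Proof.
  intros H12 H23 H1 H3 H2 t [Ht1 Ht3].
  pose proof (conv3 N HN c e t1 t t3 Ht1 Ht3) as C.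
  assert (Hup: N (vadd c (vscal t e)) <= rho).
  { assert ((t3 - t) * N (vadd c (vscal t1 e)) <= (t3 - t) * rho) by (apply Rmult_le_compat_l; lra).
    assert ((t - t1) * N (vadd c (vscal t3 e)) <= (t - t1) * rho) by (apply Rmult_le_compat_l; lra).
    apply Rmult_le_reg_l with (t3 - t1); lra. }
  apply Rle_antisym; auto.
  destruct (Rle_or_lt t t2).
  - pose proof (conv3 N HN c e t t2 t3 H ltac:(lra)) as C2.
    assert ((t3 - t) * rho <= (t3 - t) * N (vadd c (vscal t2 e))) by (apply Rmult_le_compat_l; lra).
    assert ((t2 - t) * N (vadd c (vscal t3 e)) <= (t2 - t) * rho) by (apply Rmult_le_compat_l; lra).
    apply Rmult_le_reg_l with (t3 - t2); lra.
  - pose proof (conv3 N HN c e t1 t2 t ltac:(lra) ltac:(lra)) as C2.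
    assert ((t - t1) * rho <= (t - t1) * N (vadd c (vscal t2 e))) by (apply Rmult_le_compat_l; lra).
    assert ((t - t2) * N (vadd c (vscal t1 e)) <= (t - t2) * rho) by (apply Rmult_le_compat_l; lra).
    apply Rmult_le_reg_l with (t2 - t1); lra.
Qed.

Lemma dir_nz (x y : V) k : k <> 0 -> x <> y -> vscal k (vsub y x) <> vzero.
Proof.
  intros Hk Hxy E. apply Hxy. destruct x as [x1 x2], y as [y1 y2].
  unfold vscal, vsub, vzero in E; simpl in E. injection E; intros E2 E1.
  apply Rmult_integral in E1; apply Rmult_integral in E2.
  destruct E1; [contradiction|]; destruct E2; [contradiction|].
  f_equal; lra.
Qed.

Lemma seg_from_flat N (HN : is_norm N) x y c e k t1 t2 t3 rho :
  0 < rho -> t1 < t2 -> t2 < t3 ->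
  N (vadd c (vscal t1 e)) <= rho -> N (vadd c (vscal t3 e)) <= rho ->
  rho <= N (vadd c (vscal t2 e)) ->
  e = vscal k (vsub y x) -> k <> 0 -> x <> y -> parallel_to_seg_in_S N x y.
Proof.
  intros Hr H12 H23 H1 H3 H2 He Hk Hxy.
  pose proof (flat N HN c e t1 t2 t3 rho H12 H23 H1 H3 H2) as F.
  pose proof (dir_nz x y k Hk Hxy) as Hnz. rewrite <- He in Hnz.
  exists (vscal (/rho) (vadd c (vscal t1 e))), (vscal (/rho) (vadd c (vscal t3 e))).
  split; [|split].
  - intro E. apply Hnz. destruct c as [c1 c2], e as [e1 e2].
    unfold vscal, vadd, vzero in *; simpl in *. injection E; intros E2 E1.
    assert (Hi: / rho <> 0) by (apply Rinv_neq_0_compat; lra).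
    apply Rmult_eq_reg_l in E1; auto. apply Rmult_eq_reg_l in E2; auto.
    assert (A1: (t3 - t1) * e1 = 0) by lra. assert (A2: (t3 - t1) * e2 = 0) by lra.
    apply Rmult_integral in A1; apply Rmult_integral in A2.
    destruct A1; [lra|]; destruct A2; [lra|]. subst; reflexivity.
  - intros p [s [Hs Hp]]. subst p. unfold unit_circle.
    assert (E: vadd (vscal (/ rho) (vadd c (vscal t1 e)))
        (vscal s (vsub (vscal (/ rho) (vadd c (vscal t3 e))) (vscal (/ rho) (vadd c (vscal t1 e)))))
        = vscal (/rho) (vadd c (vscal (t1 + s * (t3 - t1)) e))) by veq.
    rewrite E, (Npos N HN) by (left; apply Rinv_0_lt_compat; lra).
    rewrite F by nra. field; lra.
  - exists (/ rho * (t3 - t1) * k). subst e. veq.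
Qed.
Lemma core N (HN : is_norm N) (x y p q : V) (k a b : R) :
  x <> y -> k <> 0 -> vsub q p = vscal k (vsub y x) -> N p = N q -> 0 < a -> 0 < b ->
  N (vadd (vscal (1-a) p) (vscal b q)) = N (vadd (vscal (-a) p) (vscal (1+b) q)) ->
  parallel_to_seg_in_S N x y.
Proof.
  intros Hxy Hk Hqp Hpq Ha Hb HUW.
  pose proof (dir_nz x y k Hk Hxy) as Hnz. rewrite <- Hqp in Hnz.
  assert (Hr: 0 < N p).
  { destruct (Rle_lt_or_eq_dec 0 (N p) (Nnonneg N HN p)); auto. exfalso.
    assert (p = vzero) by (apply (Nzero N HN); auto).
    assert (q = vzero) by (apply (Nzero N HN); lra). subst. apply Hnz. veq. }
  destruct (Rle_or_lt a 1).
  - apply (seg_from_flat N HN x y p (vsub q p) k 0 1 ((1+b)/(1+b-a)) (N p)); auto; try lra.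
    + apply Rmult_lt_reg_r with (1+b-a); [lra|]. unfold Rdiv. rewrite Rmult_assoc, Rinv_l by lra. lra.
    + assert (E: vadd p (vscal 0 (vsub q p)) = p) by veq. rewrite E; lra.
    + assert (E: vadd p (vscal ((1 + b) / (1 + b - a)) (vsub q p)) =
         vscal (/(1+b-a)) (vadd (vscal (- a) p) (vscal (1 + b) q))) by veq.
      rewrite E, (Npos N HN) by (left; apply Rinv_0_lt_compat; lra).
      rewrite <- HUW.
      pose proof (Ntri N HN (vscal (1 - a) p) (vscal b q)).
      rewrite !(Npos N HN) in H0 by lra.
      apply Rmult_le_reg_l with (1+b-a); [lra|].
      rewrite <- Rmult_assoc, Rinv_r by lra. nra.
    + assert (E: vadd p (vscal 1 (vsub q p)) = q) by veq. rewrite E; lra.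
  - assert (HU: 0 < N (vadd (vscal (1 - a) p) (vscal b q))).
    { destruct (Rle_lt_or_eq_dec 0 _ (Nnonneg N HN (vadd (vscal (1 - a) p) (vscal b q)))); auto.
      exfalso. apply Hnz.
      pose proof (Nzero N HN _ (eq_sym e)) as E1.
      rewrite HUW in e. pose proof (Nzero N HN _ (eq_sym e)) as E2.
      revert E1 E2. dV. unfold vadd, vscal, vsub, vzero; simpl. intros E1 E2.
      injection E1; injection E2; intros. f_equal; lra. }
    apply (seg_from_flat N HN x y (vadd (vscal (1 - a) p) (vscal b q)) (vsub q p) k (1-a) 0 1
             (N (vadd (vscal (1 - a) p) (vscal b q)))); auto; try lra.
    + assert (E: vadd (vadd (vscal (1 - a) p) (vscal b q)) (vscal (1-a) (vsub q p)) =
                 vscal (1 - a + b) q) by veq.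
      rewrite E, (Nscal N HN).
      assert (E1: vscal b q = vadd (vadd (vscal (1 - a) p) (vscal b q)) (vscal (a - 1) p)) by veq.
      assert (E2: vscal (a - 1) p = vadd (vscal b q) (vscal (-1) (vadd (vscal (1 - a) p) (vscal b q)))) by veq.
      pose proof (Ntri N HN (vadd (vscal (1 - a) p) (vscal b q)) (vscal (a - 1) p)) as T1.
      pose proof (Ntri N HN (vscal b q) (vscal (-1) (vadd (vscal (1 - a) p) (vscal b q)))) as T2.
      rewrite <- E1 in T1. rewrite <- E2, (Nopp N HN) in T2.
      rewrite !(Npos N HN) in T1, T2 by lra.
      unfold Rabs; destruct (Rcase_abs (1 - a + b)); nra.
    + assert (E: vadd (vadd (vscal (1 - a) p) (vscal b q)) (vscal 1 (vsub q p)) =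
                 vadd (vscal (- a) p) (vscal (1 + b) q)) by veq.
      rewrite E, <- HUW; lra.
    + assert (E: vadd (vadd (vscal (1 - a) p) (vscal b q)) (vscal 0 (vsub q p)) =
                 vadd (vscal (1 - a) p) (vscal b q)) by veq.
      rewrite E; lra.
Qed.
Lemma dep u1 u2 e1 e2 : u1 * e2 - u2 * e1 = 0 -> ~ (e1 = 0 /\ e2 = 0) ->
  exists k, u1 = k * e1 /\ u2 = k * e2.
Proof.
  intros H Hn. destruct (Req_dec e1 0).
  - subst. assert (e2 <> 0) by tauto. exists (u2 / e2). split; [|field; auto].
    assert (u1 * e2 = 0) by lra. apply Rmult_integral in H1. destruct H1; [|contradiction]. lra.
  - exists (u1 / e1). split; [field; auto|].
    apply Rmult_eq_reg_r with e1; auto. field_simplify; auto. lra.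
Qed.

Lemma in_Cz x1 x2 y1 y2 z1 z2 w1 w2 al be : al <= 0 -> be <= 0 ->
  w1 = z1 + al * (z1 - x1) + be * (z1 - y1) -> w2 = z2 + al * (z2 - x2) + be * (z2 - y2) ->
  Cz (x1, x2) (y1, y2) (z1, z2) (w1, w2).
Proof.
  intros Ha Hb E1 E2 C HC Hsub.
  assert (P1: C (vadd (z1, z2) (vscal (-2 * al) (vsub (x1, x2) (z1, z2))))).
  { apply Hsub. left. exists (-2 * al). split; [lra|reflexivity]. }
  assert (P2: C (vadd (z1, z2) (vscal (-2 * be) (vsub (y1, y2) (z1, z2))))).
  { apply Hsub. right. exists (-2 * be). split; [lra|reflexivity]. }
  pose proof (HC _ _ (1/2) P1 P2 ltac:(lra)) as H.
  replace (w1, w2) with (vadd (vadd (z1, z2) (vscal (-2 * al) (vsub (x1, x2) (z1, z2))))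
       (vscal (1 / 2) (vsub (vadd (z1, z2) (vscal (-2 * be) (vsub (y1, y2) (z1, z2))))
          (vadd (z1, z2) (vscal (-2 * al) (vsub (x1, x2) (z1, z2))))))); auto.
  subst; veq.
Qed.

Lemma in_refl x1 x2 y1 y2 z1 z2 w1 w2 al be : 0 <= al -> 0 <= be ->
  w1 = z1 + al * (z1 - x1) + be * (z1 - y1) -> w2 = z2 + al * (z2 - x2) + be * (z2 - y2) ->
  reflCz (x1, x2) (y1, y2) (z1, z2) (w1, w2).
Proof.
  intros Ha Hb E1 E2. exists (2 * z1 - w1, 2 * z2 - w2). split.
  - apply (in_Cz _ _ _ _ _ _ _ _ (-al) (-be)); try lra.
  - veq.
Qed.

Lemma not_cone x1 x2 y1 y2 z1 z2 w1 w2 al be :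
  (z1 - x1) * (z2 - y2) - (z2 - x2) * (z1 - y1) <> 0 ->
  w1 = z1 + al * (z1 - x1) + be * (z1 - y1) -> w2 = z2 + al * (z2 - x2) + be * (z2 - y2) ->
  al < 0 -> 0 < be ->
  ~ Cz (x1, x2) (y1, y2) (z1, z2) (w1, w2) /\ ~ reflCz (x1, x2) (y1, y2) (z1, z2) (w1, w2).
Proof.
  set (D := (z1 - x1) * (z2 - y2) - (z2 - x2) * (z1 - y1)).
  intros HD E1 E2 Ha Hb.
  assert (HD2: 0 < D * D) by (apply Rsqr_pos_lt; auto).
  split.
  - intro H.
    specialize (H (fun P => ((z1 - x1) * (snd P - z2) - (z2 - x2) * (fst P - z1)) * D <= 0)).
    simpl in H.
    assert (HH: ((z1 - x1) * (w2 - z2) - (z2 - x2) * (w1 - z1)) * D <= 0).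
    { apply H.
      - intros [a1 a2] [b1 b2] t Ha' Hb' Ht. unfold vadd, vscal, vsub in *; simpl in *.
        replace (((z1 - x1) * (a2 + t * (b2 - a2) - z2) - (z2 - x2) * (a1 + t * (b1 - a1) - z1)) * D)
          with ((1 - t) * (((z1 - x1) * (a2 - z2) - (z2 - x2) * (a1 - z1)) * D)
                + t * (((z1 - x1) * (b2 - z2) - (z2 - x2) * (b1 - z1)) * D)) by ring.
        nra.
      - intros P [[t [Ht HP]]|[t [Ht HP]]]; subst P; unfold vadd, vscal, vsub; simpl.
        + replace (((z1 - x1) * (z2 + t * (x2 - z2) - z2) - (z2 - x2) * (z1 + t * (x1 - z1) - z1)) * D)
            with 0 by ring. lra.
        + replace (((z1 - x1) * (z2 + t * (y2 - z2) - z2) - (z2 - x2) * (z1 + t * (y1 - z1) - z1)) * D)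
            with (- t * (D * D)) by (unfold D; ring). nra. }
    replace (((z1 - x1) * (w2 - z2) - (z2 - x2) * (w1 - z1)) * D) with (be * (D * D)) in HH
      by (subst; unfold D; ring).
    nra.
  - intros [v [H Hv]].
    destruct v as [v1 v2]. unfold vsub, vscal in Hv; simpl in Hv. injection Hv; intros F2 F1.
    specialize (H (fun P => ((fst P - z1) * (z2 - y2) - (snd P - z2) * (z1 - y1)) * D <= 0)).
    simpl in H.
    assert (HH: ((v1 - z1) * (z2 - y2) - (v2 - z2) * (z1 - y1)) * D <= 0).
    { apply H.
      - intros [a1 a2] [b1 b2] t Ha' Hb' Ht. unfold vadd, vscal, vsub in *; simpl in *.
        replace (((a1 + t * (b1 - a1) - z1) * (z2 - y2) - (a2 + t * (b2 - a2) - z2) * (z1 - y1)) * D)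
          with ((1 - t) * (((a1 - z1) * (z2 - y2) - (a2 - z2) * (z1 - y1)) * D)
                + t * (((b1 - z1) * (z2 - y2) - (b2 - z2) * (z1 - y1)) * D)) by ring.
        nra.
      - intros P [[t [Ht HP]]|[t [Ht HP]]]; subst P; unfold vadd, vscal, vsub; simpl.
        + replace (((z1 + t * (x1 - z1) - z1) * (z2 - y2) - (z2 + t * (x2 - z2) - z2) * (z1 - y1)) * D)
            with (- t * (D * D)) by (unfold D; ring). nra.
        + replace (((z1 + t * (y1 - z1) - z1) * (z2 - y2) - (z2 + t * (y2 - z2) - z2) * (z1 - y1)) * D)
            with 0 by ring. lra. }
    replace (((v1 - z1) * (z2 - y2) - (v2 - z2) * (z1 - y1)) * D) with (- al * (D * D)) in HH
      by (assert (v1 = 2 * z1 - w1) by lra; assert (v2 = 2 * z2 - w2) by lra; subst; unfold D; ring).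
    nra.
Qed.

Lemma seg_D0 x1 x2 y1 y2 z1 z2 : segment (x1, x2) (y1, y2) (z1, z2) ->
  (z1 - x1) * (z2 - y2) - (z2 - x2) * (z1 - y1) = 0.
Proof.
  intros [t [_ H]]. unfold vadd, vscal, vsub in H; simpl in H. injection H; intros; subst. ring.
Qed.
Lemma decomp x1 x2 y1 y2 z1 z2 w1 w2 :
  (z1 - x1) * (z2 - y2) - (z2 - x2) * (z1 - y1) <> 0 ->
  exists al be, w1 = z1 + al * (z1 - x1) + be * (z1 - y1) /\ w2 = z2 + al * (z2 - x2) + be * (z2 - y2).
Proof.
  intros HD.
  exists (((w1 - z1) * (z2 - y2) - (w2 - z2) * (z1 - y1)) / ((z1 - x1) * (z2 - y2) - (z2 - x2) * (z1 - y1))).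
  exists (((z1 - x1) * (w2 - z2) - (z2 - x2) * (w1 - z1)) / ((z1 - x1) * (z2 - y2) - (z2 - x2) * (z1 - y1))).
  split; field; auto.
Qed.

Lemma fwd N (HN : is_norm N) (x y : V) (Hxy : x <> y) :
  ~ parallel_to_seg_in_S N x y ->
  (forall z : V, bis N x y z -> ~ segment x y z ->
     forall w : V, bis N x y w -> Cz x y z w \/ reflCz x y z w).
Proof.
  intros HnP z Hz Hnz w Hw.
  destruct x as [x1 x2], y as [y1 y2], z as [z1 z2], w as [w1 w2].
  unfold bis, vsub in Hz, Hw; simpl in Hz, Hw.
  assert (Hd: ~ (y1 - x1 = 0 /\ y2 - x2 = 0)).
  { intros [A B]. apply Hxy. f_equal; lra. }
  assert (HD: (z1 - x1) * (z2 - y2) - (z2 - x2) * (z1 - y1) <> 0).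
  { intro HD. apply Hnz.
    destruct (dep (x1 - z1) (x2 - z2) (y1 - x1) (y2 - x2)) as [s [S1 S2]]; auto.
    { rewrite <- HD. ring. }
    assert (Ed: (y1 - x1, y2 - x2) <> vzero).
    { intro E. injection E; intros. tauto. }
    assert (Hnd: 0 < N (y1 - x1, y2 - x2)).
    { destruct (Rle_lt_or_eq_dec _ _ (Nnonneg N HN (y1 - x1, y2 - x2))); auto.
      exfalso; apply Ed; apply (Nzero N HN); auto. }
    replace (z1 - x1, z2 - x2) with (vscal (-s) (y1 - x1, y2 - x2)) in Hz
      by (unfold vscal; simpl; f_equal; lra).
    replace (z1 - y1, z2 - y2) with (vscal (-s - 1) (y1 - x1, y2 - x2)) in Hz
      by (unfold vscal; simpl; f_equal; lra).
    rewrite !(Nscal N HN) in Hz. apply Rmult_eq_reg_r in Hz; [|lra].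
    assert (s = -1/2) by (revert Hz; unfold Rabs; destruct (Rcase_abs (-s)), (Rcase_abs (-s-1)); lra).
    subst s. exists (1/2). split; [lra|]. unfold vadd, vscal, vsub; simpl. f_equal; lra. }
  destruct (decomp x1 x2 y1 y2 z1 z2 w1 w2 HD) as [al [be [E1 E2]]].
  destruct (Rle_or_lt al 0) as [Ha|Ha]; destruct (Rle_or_lt be 0) as [Hb|Hb].
  - left. apply (in_Cz _ _ _ _ _ _ _ _ al be); auto.
  - destruct (Rle_lt_or_eq_dec _ _ Ha) as [Ha'|Ha'].
    + exfalso. apply HnP.
      apply (core N HN (x1, x2) (y1, y2) (z1 - x1, z2 - x2) (z1 - y1, z2 - y2) (-1) (-al) be);
        auto; try lra.
      * veq.
      * replace (vadd (vscal (1 - - al) (z1 - x1, z2 - x2)) (vscal be (z1 - y1, z2 - y2)))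
          with (w1 - x1, w2 - x2) by (subst; veq).
        replace (vadd (vscal (- - al) (z1 - x1, z2 - x2)) (vscal (1 + be) (z1 - y1, z2 - y2)))
          with (w1 - y1, w2 - y2) by (subst; veq). auto.
    + right. apply (in_refl _ _ _ _ _ _ _ _ al be); auto; lra.
  - destruct (Rle_lt_or_eq_dec _ _ Hb) as [Hb'|Hb'].
    + exfalso. apply HnP.
      apply (core N HN (x1, x2) (y1, y2) (z1 - y1, z2 - y2) (z1 - x1, z2 - x2) 1 (-be) al);
        auto; try lra.
      * veq.
      * replace (vadd (vscal (1 - - be) (z1 - y1, z2 - y2)) (vscal al (z1 - x1, z2 - x2)))
          with (w1 - y1, w2 - y2) by (subst; veq).
        replace (vadd (vscal (- - be) (z1 - y1, z2 - y2)) (vscal (1 + al) (z1 - x1, z2 - x2)))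
          with (w1 - x1, w2 - x2) by (subst; veq). auto.
    + right. apply (in_refl _ _ _ _ _ _ _ _ al be); auto; lra.
  - right. apply (in_refl _ _ _ _ _ _ _ _ al be); auto; lra.
Qed.
Lemma bwd N (HN : is_norm N) (x y : V) (Hxy : x <> y) :
  (forall z : V, bis N x y z -> ~ segment x y z ->
     forall w : V, bis N x y w -> Cz x y z w \/ reflCz x y z w) ->
  ~ parallel_to_seg_in_S N x y.
Proof.
  intros H [u [v [Huv [Hseg [l Hl]]]]].
  destruct x as [x1 x2], y as [y1 y2], u as [u1 u2], v as [v1 v2].
  unfold vsub, vscal in Hl; simpl in Hl. injection Hl; intros L2 L1.
  assert (V1: v1 = u1 + l * (y1 - x1)) by lra. assert (V2: v2 = u2 + l * (y2 - x2)) by lra.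
  subst v1 v2. clear Hl L1 L2.
  set (d1 := y1 - x1) in *. set (d2 := y2 - x2) in *.
  assert (Hd: ~ (d1 = 0 /\ d2 = 0)).
  { intros [A B]. apply Hxy. unfold d1, d2 in *. f_equal; lra. }
  assert (Hl0: l <> 0).
  { intro E. apply Huv. subst l. f_equal; ring. }
  assert (Nu: N (u1, u2) = 1).
  { apply Hseg. exists 0. split; [lra|]. veq. }
  assert (Nm: N (u1 + 1/2 * (l * d1), u2 + 1/2 * (l * d2)) = 1).
  { apply Hseg. exists (1/2). split; [lra|]. veq. }
  assert (Nv: N (u1 + l * d1, u2 + l * d2) = 1).
  { apply Hseg. exists 1. split; [lra|]. veq. }
  assert (Hdet: u1 * d2 - u2 * d1 <> 0).
  { intro E.
    destruct (dep u1 u2 (l * d1) (l * d2)) as [k [K1 K2]].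
    { replace (u1 * (l * d2) - u2 * (l * d1)) with (l * (u1 * d2 - u2 * d1)) by ring. rewrite E; ring. }
    { intros [A B]. apply Rmult_integral in A; apply Rmult_integral in B. tauto. }
    rewrite K1, K2 in Nu, Nm, Nv.
    replace (k * (l * d1), k * (l * d2)) with (vscal k (l * d1, l * d2)) in Nu by veq.
    replace (k * (l * d1) + 1/2 * (l * d1), k * (l * d2) + 1/2 * (l * d2))
      with (vscal (k + 1/2) (l * d1, l * d2)) in Nm by veq.
    replace (k * (l * d1) + l * d1, k * (l * d2) + l * d2)
      with (vscal (k + 1) (l * d1, l * d2)) in Nv by veq.
    rewrite (Nscal N HN) in Nu, Nm, Nv.
    assert (Rabs k = Rabs (k + 1)).
    { apply Rmult_eq_reg_r with (N (l * d1, l * d2)); [lra|]. intro E0. rewrite E0 in Nu. lra. }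
    assert (k = -1/2) by (revert H0; unfold Rabs; destruct (Rcase_abs k), (Rcase_abs (k+1)); lra).
    subst k. rewrite (Rabs_pos_eq (-1/2 + 1/2)) in Nm by lra. lra. }
  set (c := -2 / l).
  assert (Hc: c <> 0) by (unfold c, Rdiv; intro E; apply Rmult_integral in E; destruct E as [E|E]; [lra| apply (Rinv_neq_0_compat l Hl0); auto]).
  set (z1 := x1 + c * u1). set (z2 := x2 + c * u2).
  assert (HD: (z1 - x1) * (z2 - y2) - (z2 - x2) * (z1 - y1) <> 0).
  { replace ((z1 - x1) * (z2 - y2) - (z2 - x2) * (z1 - y1)) with (- c * (u1 * d2 - u2 * d1))
      by (unfold z1, z2, d1, d2; ring).
    intro E. apply Rmult_integral in E. destruct E; [lra|contradiction]. }
  assert (Hz: bis N (x1, x2) (y1, y2) (z1, z2)).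
  { unfold bis.
    replace (vsub (z1, z2) (x1, x2)) with (vscal c (u1, u2)) by (unfold z1, z2; veq).
    replace (vsub (z1, z2) (y1, y2)) with (vscal c (u1 + 1/2 * (l * d1), u2 + 1/2 * (l * d2)))
      by (unfold z1, z2, c, d1, d2; veq).
    rewrite !(Nscal N HN), Nu, Nm. reflexivity. }
  assert (Hw: bis N (x1, x2) (y1, y2) (z1 + x1 - y1, z2 + x2 - y2)).
  { unfold bis.
    replace (vsub (z1 + x1 - y1, z2 + x2 - y2) (x1, x2))
      with (vscal c (u1 + 1/2 * (l * d1), u2 + 1/2 * (l * d2)))
      by (unfold z1, z2, c, d1, d2; veq).
    replace (vsub (z1 + x1 - y1, z2 + x2 - y2) (y1, y2)) with (vscal c (u1 + l * d1, u2 + l * d2))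
      by (unfold z1, z2, c, d1, d2; veq).
    rewrite !(Nscal N HN), Nv, Nm. reflexivity. }
  assert (Hnz: ~ segment (x1, x2) (y1, y2) (z1, z2)).
  { intro S. apply HD. apply seg_D0; auto. }
  destruct (not_cone x1 x2 y1 y2 z1 z2 (z1 + x1 - y1) (z2 + x2 - y2) (-1) 1 HD) as [A B];
    try lra.
  destruct (H (z1, z2) Hz Hnz _ Hw); contradiction.
Qed.

Theorem lemma2p1 (N : V -> R) (HN : is_norm N) (x y : V) (Hxy : x <> y) :
  ~ parallel_to_seg_in_S N x y <->
  (forall z : V, bis N x y z -> ~ segment x y z ->
     forall w : V, bis N x y w -> Cz x y z w \/ reflCz x y z w).
Proof. split; [apply fwd | apply bwd]; auto. Qed.
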